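(* Let $G$ be a connected graph, $Q$ a clique separator of $G$, and $\mathcal D$ the $Q$-skeleton of $G$. If ${\rm Upper}_Q$ contains no full antipodal triple, then $\mathcal D$ is a partition of $\Gamma_Q$, i.e. its members are pairwise disjoint and their union is $\Gamma_Q$.
   Context: Graphs are finite and simple. A clique is an inclusion-maximal set of pairwise adjacent vertices. A clique $Q$ of $G$ is a clique separator if $G-Q$ has at least two connected components; if their vertex sets are $V_1,\dots,V_s$, put $\gamma_i=G[V_i\cup Q]$ and $\Gamma_Q=\{\gamma_1,\dots,\gamma_s\}$. A relevant clique of $\gamma\in\Gamma_Q$ is a clique $K$ of the graph $\gamma$ with $K\cap Q\neq\emptyset$ and $K\neq Q$. An element $\gamma\in\Gamma_Q$ is a neighboring subgraph of a vertex $v$ if $v$ belongs to some relevant clique of $\gamma$; a set $W\subseteq\Gamma_Q$ is neighboring if there is $v\in Q$ such that every member of $W$ is a neighboring subgraph of $v$; a neighboring triple is a neighboring set of three elements. Relations on $\Gamma_Q$: attachedness $\gamma\bowtie\gamma'$ iff there are relevant cliques $K$ of $\gamma$ and $K'$ of $\gamma'$ with $K\cap K'\cap Q\neq\emptyset$; dominance $\gamma\le\gamma'$ iff $\gamma\bowtie\gamma'$ and, for each relevant clique $K'$ of $\gamma'$, either $K\cap Q\subseteq K'\cap Q$ for every relevant clique $K$ of $\gamma$, or $K\cap K'\cap Q=\emptyset$ for every relevant clique $K$ of $\gamma$; antipodality $\gamma\leftrightarrow\gamma'$ iff there are relevant cliques $K$ of $\gamma$ and $K'$ of $\gamma'$ with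 $K\cap K'\cap Q\neq\emptyset$ and $K\cap Q$, $K'\cap Q$ inclusion-wise incomparable. Dominance is a preorder; by standing convention, elements $\gamma,\gamma'$ with $\gamma\le\gamma'$ and $\gamma'\le\gamma$ are identified (attachedness, antipodality and being neighboring are compatible with this identification), so $(\Gamma_Q,\le)$ is a partial order. A full antipodal triple is a neighboring triple whose elements are pairwise antipodal. ${\rm Upper}_Q$ is the set of maximal elements of $(\Gamma_Q,\le)$, $\ell=|{\rm Upper}_Q|$, and $(u_1,\dots,u_\ell)$ is a fixed ordering of ${\rm Upper}_Q$. For $i\in[\ell]$, $D_i=\{\gamma\in\Gamma_Q:\gamma\le u_i \text{ and } \gamma\not\le u_j \ \forall j\in[\ell]\setminus\{i\}\}$; for $i<j$ in $[\ell]$, $D_{i,j}=\{\gamma\in\Gamma_Q:\gamma\le u_i,\ \gamma\le u_j \text{ and } \gamma\not\le u_k\ \forall k\in[\ell]\setminus\{i,j\}\}$. The $Q$-skeleton is $\mathcal D=\{D_i: i\in[\ell]\}\cup\{D_{i,j}: i,j\in[\ell], i<j\}$. *)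

(* Defs.v *)
From mathcomp Require Import all_boot.
Set Implicit Arguments. Unset Strict Implicit. Unset Printing Implicit Defensive.

Section CliqueSep.
Variables (T : finType) (e : rel T).

Definition simple_graph := symmetric e /\ irreflexive e.

Definition connected_graph := forall x y : T, connect e x y.

(* K is a clique (inclusion-maximal set of pairwise adjacent vertices)
   of the induced subgraph G[S] *)
Definition clique_in (S K : {set T}) : Prop :=
  K \subset S /\
  (forall x y, x \in K -> y \in K -> x != y -> e x y) /\
  (forall x, x \in S -> x \notin K -> exists2 y, y \in K & ~~ e x y).

Definition clique (K : {set T}) : Prop := clique_in [set: T] K.

Definition rel_minus (Q : {set T}) : rel T :=
  [rel x y | [&& e x y, x \notin Q & y \notin Q]].

Definition component (Q C : {set T}) : Prop :=
  exists2 x, x \notin Q & C = [set y | (y \notin Q) && connect (rel_minus Q) x y].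

Definition clique_separator (Q : {set T}) : Prop :=
  clique Q /\ exists C1 C2, [/\ component Q C1, component Q C2 & C1 != C2].

(* An element gamma = G[C :|: Q] of Gamma_Q is represented by its component C.
   Relevant clique of gamma. *)
Definition relevant (Q C K : {set T}) : Prop :=
  [/\ clique_in (C :|: Q) K, K :&: Q != set0 & K != Q].

Definition neighboring (Q C : {set T}) (v : T) : Prop :=
  exists2 K, relevant Q C K & v \in K.

Definition attached (Q C C' : {set T}) : Prop :=
  exists K K', [/\ relevant Q C K, relevant Q C' K' & K :&: K' :&: Q != set0].

Definition dominated (Q C C' : {set T}) : Prop :=
  attached Q C C' /\
  forall K', relevant Q C' K' ->
    (forall K, relevant Q C K -> K :&: Q \subset K' :&: Q) \/
    (forall K, relevant Q C K -> K :&: K' :&: Q = set0).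

Definition antipodal (Q C C' : {set T}) : Prop :=
  exists K K', [/\ relevant Q C K, relevant Q C' K', K :&: K' :&: Q != set0,
                   ~~ (K :&: Q \subset K' :&: Q) & ~~ (K' :&: Q \subset K :&: Q)].

Definition equiv_dom (Q C C' : {set T}) : Prop :=
  dominated Q C C' /\ dominated Q C' C.

(* maximal elements of (Gamma_Q, <=), i.e. (representatives of) Upper_Q *)
Definition upper (Q C : {set T}) : Prop :=
  component Q C /\ forall C', component Q C' -> dominated Q C C' -> dominated Q C' C.

(* Upper_Q contains no full antipodal triple: no three (pairwise distinct,
   i.e. pairwise non-identified) elements of Upper_Q forming a neighboring
   triple whose elements are pairwise antipodal. *)
Definition no_full_antipodal_triple_in_upper (Q : {set T}) : Prop :=
  forall A B C, upper Q A -> upper Q B -> upper Q C ->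
    ~ equiv_dom Q A B -> ~ equiv_dom Q B C -> ~ equiv_dom Q A C ->
    ~ ((exists2 v, v \in Q & [/\ neighboring Q A v, neighboring Q B v & neighboring Q C v])
       /\ antipodal Q A B /\ antipodal Q B C /\ antipodal Q A C).

(* us = (u_1, ..., u_l) is an ordering of Upper_Q (one representative per
   identified class); indices are 0-based. *)
Definition upper_ordering (Q : {set T}) (us : seq {set T}) : Prop :=
  (forall i, i < size us -> upper Q (nth set0 us i)) /\
  (forall i j, i < size us -> j < size us -> i != j ->
      ~ equiv_dom Q (nth set0 us i) (nth set0 us j)) /\
  (forall C, upper Q C -> exists2 i, i < size us & equiv_dom Q C (nth set0 us i)).

Definition in_D1 (Q : {set T}) (us : seq {set T}) (i : nat) (C : {set T}) : Prop :=
  [/\ i < size us, dominated Q C (nth set0 us i) &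
      forall j, j < size us -> j != i -> ~ dominated Q C (nth set0 us j)].

Definition in_D2 (Q : {set T}) (us : seq {set T}) (i j : nat) (C : {set T}) : Prop :=
  [/\ i < j < size us, dominated Q C (nth set0 us i), dominated Q C (nth set0 us j) &
      forall k, k < size us -> k != i -> k != j -> ~ dominated Q C (nth set0 us k)].

Definition skeleton_partition (Q : {set T}) (us : seq {set T}) : Prop :=
  (forall C, component Q C ->
     (exists i, in_D1 Q us i C) \/ (exists i j, in_D2 Q us i j C)) /\
  (forall C i i', i != i' -> ~ (in_D1 Q us i C /\ in_D1 Q us i' C)) /\
  (forall C i j k, ~ (in_D1 Q us i C /\ in_D2 Q us j k C)) /\
  (forall C i j i' j', (i, j) != (i', j') -> ~ (in_D2 Q us i j C /\ in_D2 Q us i' j' C)).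

End CliqueSep.

(* Main.v *)
Require Import Defs.
From Stdlib Require Import Classical ClassicalEpsilon.
From mathcomp Require Import all_boot.
Set Implicit Arguments. Unset Strict Implicit. Unset Printing Implicit Defensive.

Section Aux.
Variables (T : finType) (e : rel T) (Q : {set T}).

Lemma ne0P (A B : {set T}) : A :&: B != set0 -> exists x, [/\ x \in A & x \in B].
Proof. by case/set0Pn => x; rewrite inE => /andP[]; exists x. Qed.

Lemma L1 (C D : {set T}) : dominated e Q C D ->
  exists2 K', relevant e Q D K' & forall K0, relevant e Q C K0 -> K0 :&: Q \subset K' :&: Q.
Proof.
case=> [[K1 [K' [rK1 rK' ne]]] H]; exists K' => //.
case: (H K' rK') => // H2.
by rewrite (H2 K1 rK1) eqxx in ne.
Qed.

Lemma rel_pt (C K : {set T}) : relevant e Q C K -> exists x, [/\ x \in K & x \in Q].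
Proof. by case=> _ /ne0P. Qed.

Lemma dom_trans (C D E : {set T}) :
  dominated e Q C D -> dominated e Q D E -> dominated e Q C E.
Proof.
move=> hCD hDE.
have [K' rK' sC] := L1 hCD; have [K'' rK'' sD] := L1 hDE.
split.
  case: hCD => [[K1 [K2 [rK1 _ _]]] _].
  exists K1, K''; split => //.
  have [x [xK1 xQ]] := rel_pt rK1.
  have : x \in K'' :&: Q.
    apply: (subsetP (sD K' rK')); apply: (subsetP (sC K1 rK1)).
    by rewrite inE xK1 xQ.
  rewrite inE => /andP[xK'' _].
  by apply/set0Pn; exists x; rewrite !inE xK1 xK'' xQ.
move=> K3 rK3.
case: hDE => _ /(_ K3 rK3) [H|H]; [left|right] => K rK.
  exact: subset_trans (sC K rK) (H K' rK').
apply/eqP; rewrite -subset0; apply/subsetP => x; rewrite !inE.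
move=> /andP[/andP[xK xK3] xQ].
have : x \in K' :&: Q by apply: (subsetP (sC K rK)); rewrite inE xK xQ.
rewrite inE => /andP[xK' _].
by have := H K' rK'; move/setP/(_ x); rewrite !inE xK' xK3 xQ.
Qed.

Lemma single_trace (X Y : {set T}) : dominated e Q X Y -> dominated e Q Y X ->
  forall K1 K2, relevant e Q X K1 -> relevant e Q X K2 -> K1 :&: Q \subset K2 :&: Q.
Proof.
move=> hXY hYX K1 K2 r1 r2.
have [K' rK' sX] := L1 hXY.
case: hYX => _ /(_ K2 r2) [H|H].
  exact: subset_trans (sX K1 r1) (H K' rK').
have [x [xK2 xQ]] := rel_pt r2.
have : x \in K' :&: Q by apply: (subsetP (sX K2 r2)); rewrite inE xK2 xQ.
rewrite inE => /andP[xK' _].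
by have := H K' rK'; move/setP/(_ x); rewrite !inE xK' xK2 xQ.
Qed.


Definition pb (P : Prop) : bool := if excluded_middle_informative P then true else false.
Lemma pbP (P : Prop) : reflect P (pb P).
Proof. by rewrite /pb; case: excluded_middle_informative => h; constructor. Qed.

Definition sdom (D E : {set T}) := component e Q E /\ dominated e Q D E /\ ~ dominated e Q E D.
Definition above (D : {set T}) := [set E | pb (sdom D E)].

Lemma exists_dom (us : seq {set T}) : upper_ordering e Q us ->
  forall C, component e Q C -> exists2 i, i < size us & dominated e Q C (nth set0 us i).
Proof.
move=> hord C.
suff: forall n D, #|above D| < n -> component e Q D ->
   exists2 i, i < size us & dominated e Q D (nth set0 us i).
  by apply; apply: ltnSn.
elim=> [|n IH] D // hn cD.
case: (classic (upper e Q D)) => hu.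
  have [i li [d1 _]] := hord.2.2 D hu; by exists i.
have [C' [cC' dC' ndC']] : exists C', [/\ component e Q C', dominated e Q D C' & ~ dominated e Q C' D].
  apply: NNPP => hn'; apply: hu; split => // C'' cC'' d''.
  apply: NNPP => nd; apply: hn'; by exists C''.
have sub : above C' \proper above D.
  apply/properP; split.
    apply/subsetP => E; rewrite !inE => /pbP [cE [dE ndE]]; apply/pbP.
    split => //; split; first exact: dom_trans dC' dE.
    move=> dED; apply: ndC'; exact: dom_trans dE dED.
  exists C'; rewrite !inE; apply/pbP => //.
  by case=> _ [h1 h2].
have [i li di] := IH C' (leq_trans (proper_card sub) hn) cC'.
exists i => //; exact: dom_trans dC' di.
Qed.

End Aux.

Theorem lemma3p1 (T : finType) (e : rel T) (Q : {set T}) (us : seq {set T}) :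
  simple_graph e -> connected_graph e -> clique_separator e Q ->
  upper_ordering e Q us ->
  no_full_antipodal_triple_in_upper e Q ->
  skeleton_partition e Q us.
Proof.
move=> _ _ _ hord hnt.
have hup := hord.1; have hdist := hord.2.1; have hcov := hord.2.2.
set N := nth set0 us.
have ST : forall i, i < size us -> forall K1 K2, relevant e Q (N i) K1 ->
    relevant e Q (N i) K2 -> K1 :&: Q \subset K2 :&: Q.
  move=> i li; have [i' _ [d1 d2]] := hcov _ (hup i li); exact: single_trace d1 d2.
have noincl : forall p q Kp Kq x, p < size us -> q < size us -> p != q ->
    relevant e Q (N p) Kp -> relevant e Q (N q) Kq -> x \in Kp -> x \in Kq -> x \in Q ->
    Kp :&: Q \subset Kq :&: Q -> False.
  move=> p q Kp Kq x lp lq npq rp rq xp xq xQ sub.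
  have dpq : dominated e Q (N p) (N q).
    split.
      exists Kp, Kq; split => //; apply/set0Pn; exists x; by rewrite !inE xp xq xQ.
    move=> K' rK'; left => K rK.
    apply: subset_trans (ST p lp _ _ rK rp) _.
    apply: subset_trans sub _; exact: ST q lq _ _ rq rK'.
  apply: (hdist p q lp lq npq); split => //.
  exact: (hup p lp).2 _ (hup q lq).1 dpq.
have three : forall C a b k, a < size us -> b < size us -> k < size us ->
    a != b -> b != k -> a != k -> dominated e Q C (N a) -> dominated e Q C (N b) ->
    dominated e Q C (N k) -> False.
  move=> C a b k la lb lk nab nbk nak da db dk.
  have [K1 rK1] : exists K1, relevant e Q C K1.
    by case: da => [[K1 [_ [rK1 _ _]]] _]; exists K1.
  have [x [xK xQ]] := rel_pt rK1.
  have get : forall X, dominated e Q C X -> exists2 KX, relevant e Q X KX & x \in KX.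
    move=> X dX; have [KX rKX sX] := L1 dX; exists KX => //.
    have : x \in KX :&: Q by apply: (subsetP (sX K1 rK1)); rewrite inE xK xQ.
    by rewrite inE => /andP[].
  have [Ka ra xa] := get _ da; have [Kb rb xb] := get _ db; have [Kk rk xk] := get _ dk.
  have anti : forall p q Kp Kq, p < size us -> q < size us -> p != q ->
      relevant e Q (N p) Kp -> relevant e Q (N q) Kq -> x \in Kp -> x \in Kq ->
      antipodal e Q (N p) (N q).
    move=> p q Kp Kq lp lq npq rp rq xp xq; exists Kp, Kq; split => //.
    - apply/set0Pn; exists x; by rewrite !inE xp xq xQ.
    - by apply/negP; apply: (noincl p q Kp Kq x).
    - by apply/negP; apply: (noincl q p Kq Kp x) => //; rewrite eq_sym.
  apply: (hnt (N a) (N b) (N k) (hup a la) (hup b lb) (hup k lk)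
     (hdist a b la lb nab) (hdist b k lb lk nbk) (hdist a k la lk nak)).
  split.
    exists x => //; split; [exists Ka|exists Kb|exists Kk] => //.
  split; first exact: (anti a b Ka Kb).
  split; first exact: (anti b k Kb Kk).
  exact: (anti a k Ka Kk).
split.
  move=> C cC.
  have [i0 l0 d0] := exists_dom hord cC.
  case: (classic (forall j, j < size us -> j != i0 -> ~ dominated e Q C (N j))) => H1.
    by left; exists i0; split.
  have [j [lj nj dj]] : exists j, [/\ j < size us, j != i0 & dominated e Q C (N j)].
    apply: NNPP => hn; apply: H1 => j lj nj dj; apply: hn; by exists j.
  have two : forall a b, a < b -> b < size us -> a < size us ->
      dominated e Q C (N a) -> dominated e Q C (N b) ->
      (exists i, in_D1 e Q us i C) \/ (exists i j, in_D2 e Q us i j C).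
    move=> a b ab lb la da db; right; exists a, b; split => //.
      by rewrite ab lb.
    move=> k lk nka nkb dk.
    apply: (three C a b k la lb lk) => //.
    - by rewrite neq_ltn ab.
    - by rewrite eq_sym.
    - by rewrite eq_sym.
  case: (ltngtP i0 j) => h.
  - exact: (two i0 j h lj l0 d0 dj).
  - exact: (two j i0 h l0 lj dj d0).
  - by rewrite h eqxx in nj.
split.
  move=> C i i' nii' [[li di H] [li' di' _]].
  by apply: (H i') => //; rewrite eq_sym.
split.
  move=> C i j k [[li di H] [/andP[jk lk] dj dk _]].
  case: (eqVneq j i) => [eji|nji].
    apply: (H k lk) => //; apply/eqP => eki; subst.
    by rewrite ltnn in jk.
  apply: (H j (ltn_trans jk lk)) => //.
move=> C i j i' j' neq [[/andP[ij lj] di dj H] [/andP[ij' lj'] di' dj' H']].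
have hi' : (i' == i) || (i' == j).
  apply: contraT => /norP[n1 n2]; exfalso; exact: (H i' (ltn_trans ij' lj') n1 n2 di').
have hj' : (j' == i) || (j' == j).
  apply: contraT => /norP[n1 n2]; exfalso; exact: (H j' lj' n1 n2 dj').
move: neq.
case/orP: hi' => /eqP ei; case/orP: hj' => /eqP ej; subst => //.
- by rewrite ltnn in ij'.
- by rewrite eqxx.
- move: (ltn_trans ij ij'); by rewrite ltnn.
- by rewrite ltnn in ij'.
Qed.
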